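(* Let $g\in\mathscr T'$ and $f\in\mathscr T$. For $n\in\mathbb N$ let $\varepsilon_n(f)\in\mathcal F_{\rm fin}(\mathscr T)$ be the vector whose only nonzero component is the $n$-particle component $\frac{1}{\sqrt{n!}}f^{\otimes n}$. Then the series $\varepsilon(f)=\sum_{n\ge0}\varepsilon_n(f)$ converges absolutely in $\mathcal F_g$ (denote its sum $\varepsilon_g(f)$) and in $\mathcal F_0=\mathcal F(\mathfrak h)$ (sum $\varepsilon_0(f)$), and $$U_{g,0}\,\varepsilon_g(f)=e^{\langle g,f\rangle}\,\varepsilon_0(f),$$ where $U_{g,0}:\mathcal F_g\to\mathcal F_0$ is the continuous extension of $\Psi\mapsto e^{a(g)}\Psi$, $\Psi\in\mathcal F_{\rm fin}(\mathscr T)$.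
   Context: Let $\mathfrak h$ be a complex Hilbert space, $\mathscr T$ a topological vector space continuously embedded in $\mathfrak h$ with dense image, $\mathscr T'$ the space of continuous antilinear functionals on $\mathscr T$; write $\langle\varphi,f\rangle:=\overline{\varphi(f)}$ for $\varphi\in\mathscr T'$, $f\in\mathscr T$. $\mathcal F(\mathfrak h)$ is the symmetric Fock space; $\mathcal F_{\rm fin}(\mathscr T)$ the vectors with finitely many nonzero components, the $n$-th in the algebraic symmetric tensor product of $n$ copies of $\mathscr T$. For $g\in\mathscr T'$, $a(g)$ on $\mathcal F_{\rm fin}(\mathscr T)$ is defined linearly by $(a(g)\Psi)_n=\frac{\sqrt{n+1}}{(n+1)!}\sum_{\sigma\in S_{n+1}}\langle g,\psi_{\sigma(1)}\rangle\psi_{\sigma(2)}\otimes\cdots\otimes\psi_{\sigma(n+1)}$ for $\Psi_{n+1}=\psi_1\otimes_s\cdots\otimes_s\psi_{n+1}$; $e^{a(g)}=\sum_k a(g)^k/k!$ (finite sum). $\mathcal F_g$ is the completion of $\mathcal F_{\rm fin}(\mathscr T)$ in the inner product $\langle\Psi,\Phi\rangle_g:=\langle e^{a(g)}\Psi,e^{a(g)}\Phi\rangle_{\mathcal F(\mathfrak h)}$. *)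

(* Defs.v *)
From HB Require Import structures.
From mathcomp Require Import all_boot all_order all_algebra all_fingroup.
From mathcomp Require Import all_classical all_reals all_analysis.
From mathcomp Require Import complex.
Import ComplexField.
Import Order.TTheory GRing.Theory Num.Theory.
Import numFieldNormedType.Exports numFieldTopology.Exports.

Set Implicit Arguments.
Unset Strict Implicit.
Unset Printing Implicit Defensive.

Local Open Scope ring_scope.
Local Open Scope classical_set_scope.

#[non_forgetful_inheritance]
HB.instance Definition _ (R : realType) := PseudoPointedMetric.copy R[i] (R[i])^o.

Section Defs.
Variable R : realType.
Local Notation C := R[i].

(** ** Complex Hilbert space  (h, <.,.>) ; inner product antilinear in the
    first argument and linear in the second. *)
Definition is_inner_product (H : lmodType C) (ip : H -> H -> C) : Prop :=
  [/\ (forall x (a : C) y z, ip x (a *: y + z) = a * ip x y + ip x z),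
      (forall x y, ip y x = conjc (ip x y)),
      (forall x, 0 <= ip x x) &
      (forall x, ip x x = 0 -> x = 0)].

Definition ip_norm (H : lmodType C) (ip : H -> H -> C) (x : H) : R :=
  Num.sqrt (complex.Re (ip x x)).

Definition ip_complete (H : lmodType C) (ip : H -> H -> C) : Prop :=
  forall u : nat -> H,
    (forall e : R, 0 < e -> exists N, forall m n, (N <= m)%N -> (N <= n)%N ->
        ip_norm ip (u m - u n) < e) ->
    exists l : H, (fun n => ip_norm ip (u n - l)) @ \oo --> (0 : R).

Definition continuous_dense_embedding (T : topologicalLmodType C)
  (H : lmodType C) (ip : H -> H -> C) (emb : T -> H) : Prop :=
  [/\ (forall (a : C) x y, emb (a *: x + y) = a *: emb x + emb y),
      injective emb,
      (forall x : T, forall e : R, 0 < e ->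
          \forall y \near x, ip_norm ip (emb y - emb x) < e) &
      (forall h : H, forall e : R, 0 < e -> exists f : T, ip_norm ip (h - emb f) < e)].

Definition in_antidual (T : topologicalLmodType C) (g : T -> C) : Prop :=
  (forall (a : C) x y, g (a *: x + y) = conjc a * g x + g y) /\ continuous g.

Definition dualp (T : topologicalLmodType C) (g : T -> C) (f : T) : C :=
  conjc (g f).

Definition cexp (z : C) : C :=
  real_complex R (expR (complex.Re z)) *
  (real_complex R (cos (complex.Im z)) + 'i%C * real_complex R (sin (complex.Im z))).

(** A vector of F_fin(T) is represented by a finite formal linear combination
    [:: (c_1, s_1); ...; (c_k, s_k)] meaning  sum_j c_j * (s_j)_1 (x)_s ... (x)_s (s_j)_{n_j},
    a symmetric product tensor of n_j = size s_j factors, sitting in the n_j-particle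
    component; (x)_s is the symmetrisation of the tensor product.
    Sums of vectors are concatenations. *)
Section Fock.
Variables (T : topologicalLmodType C) (H : lmodType C) (ip : H -> H -> C) (emb : T -> H).

Definition fockrep := seq (C * seq T).

(* <psi_1 (x)_s ... (x)_s psi_n , phi_1 (x)_s ... (x)_s phi_m> in F(h) *)
Definition sym_ip (s t : seq T) : C :=
  if size s == size t then
    ((size s)`!%:R)^-1 * \sum_(sg : {perm 'I_(size s)})
        \prod_(i < size s) ip (emb (nth 0 s i)) (emb (nth 0 t (sg i)))
  else 0.

Definition fock_ip (Psi Phi : fockrep) : C :=
  \sum_(p <- Psi) \sum_(q <- Phi) conjc p.1 * q.1 * sym_ip p.2 q.2.

Definition fock_norm (Psi : fockrep) : R := Num.sqrt (complex.Re (fock_ip Psi Psi)).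

Definition fscale (c : C) (Psi : fockrep) : fockrep := [seq (c * p.1, p.2) | p <- Psi].

(* a(g) on a generator psi_1 (x)_s ... (x)_s psi_{n+1}:
   sqrt(n+1)/(n+1)! sum_{sigma in S_{n+1}} <g, psi_sigma(1)> psi_sigma(2) (x) ... (x) psi_sigma(n+1);
   the right-hand tensor can be symmetrised since the sum is symmetric. *)
Definition annih_gen (g : T -> C) (p : C * seq T) : fockrep :=
  match p.2 with
  | [::] => [::]
  | _ :: _ =>
    let n := (size p.2).-1 in
    [seq (p.1 * real_complex R (Num.sqrt (n.+1%:R : R)) / (n.+1)`!%:R
              * dualp g (nth 0 p.2 (sg ord0)),
          [seq nth 0 p.2 (sg (lift ord0 i)) | i <- enum 'I_n])
    | sg : {perm 'I_n.+1} <- enum {perm 'I_n.+1}]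
  end.

Definition annih (g : T -> C) (Psi : fockrep) : fockrep :=
  flatten [seq annih_gen g p | p <- Psi].

(* e^{a(g)} Psi = sum_k a(g)^k Psi / k!  (finite sum: a(g)^k Psi = 0 beyond the
   maximal particle number of Psi) *)
Definition exp_annih (g : T -> C) (Psi : fockrep) : fockrep :=
  flatten [seq fscale ((k`!%:R)^-1) (iter k (annih g) Psi)
          | k <- iota 0 (\max_(p <- Psi) size p.2).+1].

Definition g_norm (g : T -> C) (Psi : fockrep) : R := fock_norm (exp_annih g Psi).

Definition eps (n : nat) (f : T) : fockrep :=
  [:: (real_complex R (Num.sqrt (n`!%:R : R))^-1, nseq n f)].

Definition eps_partial (N : nat) (f : T) : fockrep :=
  flatten [seq eps n f | n <- iota 0 N].

End Fock.
End Defs.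

(* Main.v *)
Require Import Defs.
From HB Require Import structures.
From mathcomp Require Import all_boot all_order all_algebra all_fingroup.
From mathcomp Require Import all_classical all_reals all_analysis.
From mathcomp Require Import complex.
Import ComplexField.
Import Order.TTheory GRing.Theory Num.Theory.
Import numFieldNormedType.Exports numFieldTopology.Exports.
Local Open Scope ring_scope.
Local Open Scope classical_set_scope.
From mathcomp Require Import ring lra zify.
Import Normc.
Set Implicit Arguments.
Unset Strict Implicit.
Unset Printing Implicit Defensive.

Lemma binom_fact_sum_gen (F : numFieldType) (x y : F) n :
  \sum_(i < n.+1) x ^+ (n - i) * y ^+ i / ((n - i)`! * i`!)%:R = (x + y) ^+ n / (n`!)%:R.
Proof.
rewrite exprDn mulr_suml; apply: eq_bigr => i _.
have hi : (i <= n)%N by rewrite -ltnS.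
have e := bin_fact hi.
have hq : ((((n - i)`! * i`!)%N%:R : F))^-1 = ('C(n, i))%:R / (n`!)%:R.
  rewrite -e !natrM; field.
  by rewrite !pnatr_eq0 -!lt0n !fact_gt0 bin_gt0 hi.
rewrite hq -mulr_natr; ring.
Qed.


Section RealAux.
Variable R : realType.

Lemma amgm_sqrt (x y : R) : 0 <= x -> 0 <= y -> Num.sqrt (x * y) <= (x + y) / 2.
Proof.
move=> hx hy; rewrite sqrtrM //.
have ha := sqrtr_ge0 x; have hb := sqrtr_ge0 y.
rewrite -{2}(sqr_sqrtr hx) -{2}(sqr_sqrtr hy).
have := sqr_ge0 (Num.sqrt x - Num.sqrt y).
set a := Num.sqrt x; set b := Num.sqrt y => h.
rewrite !expr2 in h *; nra.
Qed.

Lemma sqrt_exp_series_cvg (s : R) : 0 <= s ->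
  cvgn (series (fun n => Num.sqrt (s ^+ n / (n`!)%:R))).
Proof.
move=> s0.
apply: (@series_le_cvg _ _ (fun n => (exp_coeff (2 * s) n + geometric 1 (2^-1) n) / 2)).
- by move=> n; rewrite sqrtr_ge0.
- move=> n; rewrite /exp_coeff /geometric /= divr_ge0 // addr_ge0 //.
    by rewrite divr_ge0 // exprn_ge0 // mulr_ge0.
- move=> n; rewrite /exp_coeff /geometric /= ?mul1r.
  have -> : s ^+ n / (n`!)%:R = (2 * s) ^+ n / (n`!)%:R * 2^-1 ^+ n.
    rewrite exprMn exprVn; field.
    by rewrite pnatr_eq0 -lt0n fact_gt0 expf_neq0 // pnatr_eq0.
  apply: amgm_sqrt; first by rewrite divr_ge0 // exprn_ge0 // mulr_ge0.
  by rewrite exprn_ge0 // invr_ge0.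
- have -> : (fun n => (exp_coeff (2 * s) n + geometric 1 (2^-1) n) / 2)
     = (2^-1 : R) *: ((exp_coeff (2 * s)) + geometric 1 (2^-1)).
    by apply/funext => n; rewrite /= mulrC.
  apply: is_cvg_seriesZ; apply: is_cvg_seriesD; first exact: is_cvg_series_exp_coeff.
  apply: is_cvg_geometric_series.
  by rewrite ger0_norm ?invr_ge0 // invf_lt1 // ltr1n.
Qed.

Lemma sqrt_exp_cvg0 (K s : R) :
  (fun N => Num.sqrt (K * (s ^+ N / (N`!)%:R))) @ \oo --> (0 : R).
Proof.
have h1 : (fun N => K * (s ^+ N / (N`!)%:R)) @ \oo --> (0 : R).
  rewrite -(mulr0 K); apply: cvgMr.
  have := cvg_exp_coeff s. by [].
rewrite -sqrtr0; exact: (continuous_cvg _ (@sqrt_continuous R 0) h1).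
Qed.

Lemma exp_partial_le (x : R) n : 0 <= x -> series (exp_coeff x) n <= expR x.
Proof.
move=> x0; apply: nondecreasing_cvgn_le; last exact: is_cvg_series_exp_coeff.
apply: nondecreasing_series => k _ _; rewrite /exp_coeff /= divr_ge0 // exprn_ge0 //.
Qed.

Lemma binom_fact_sum (x y : R) n :
  \sum_(i < n.+1) x ^+ (n - i) * y ^+ i / ((n - i)`! * i`!)%:R = (x + y) ^+ n / (n`!)%:R.
Proof. exact: binom_fact_sum_gen. Qed.

End RealAux.

Section CAux.
Variable R : realType.
Local Notation C := R[i].
Local Open Scope complex_scope.

Definition nc (z : C) : R := normc z.

Lemma nc_ge0 z : 0 <= nc z.
Proof. by case: z => a b; rewrite /nc /= sqrtr_ge0. Qed.

Lemma ncD (z w : C) : nc (z + w) <= nc z + nc w.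
Proof. exact: le_normcD. Qed.

Lemma ncM (z w : C) : nc (z * w) = nc z * nc w.
Proof. exact: normcM. Qed.

Lemma ncX (z : C) k : nc (z ^+ k) = nc z ^+ k.
Proof.
elim: k => [|k IH]; first by rewrite !expr0 /nc normc1.
by rewrite !exprS ncM IH.
Qed.

Lemma ncV (z : C) : nc z^-1 = (nc z)^-1.
Proof. exact: normcV. Qed.

Lemma ncR (x : R) : nc x%:C = `|x|.
Proof. by rewrite /nc /= expr0n /= addr0 sqrtr_sqr. Qed.

Lemma ncN (z : C) : nc (- z) = nc z.
Proof. exact: normcN. Qed.

Lemma ncB (z w : C) : nc (z - w) = nc (w - z).
Proof. by rewrite -ncN opprB. Qed.

Lemma nc_nat n : nc (n%:R) = n%:R.
Proof. by rewrite -(rmorph_nat (real_complex R)) ncR ger0_norm. Qed.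

Lemma nc_sum I (r : seq I) (P : pred I) (F : I -> C) :
  nc (\sum_(i <- r | P i) F i) <= \sum_(i <- r | P i) nc (F i).
Proof.
elim/big_rec2: _ => [|i y z _ IH]; first by rewrite /nc normc0.
by apply: le_trans (ncD _ _) _; rewrite lerD2l.
Qed.

Lemma nc_term (z : C) k : nc (z ^+ k / (k`!)%:R) = nc z ^+ k / (k`!)%:R.
Proof. by rewrite ncM ncV ncX nc_nat. Qed.

Lemma Re_le_nc (z : C) : `|complex.Re z| <= nc z.
Proof.
case: z => a b; rewrite /nc /= -sqrtr_sqr.
by apply: ler_wsqrtr; rewrite lerDl sqr_ge0.
Qed.

Lemma Im_le_nc (z : C) : `|complex.Im z| <= nc z.
Proof.
case: z => a b; rewrite /nc /= -sqrtr_sqr.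
by apply: ler_wsqrtr; rewrite lerDr sqr_ge0.
Qed.

Lemma nc_sq (z : C) : nc z ^+ 2 = complex.Re z ^+ 2 + complex.Im z ^+ 2.
Proof. by case: z => a b; rewrite /nc /= sqr_sqrtr // addr_ge0 // sqr_ge0. Qed.


Lemma Re_mulR (z : C) (r : R) : complex.Re (z * r%:C) = complex.Re z * r.
Proof. by case: z => a b /=; rewrite mulr0 subr0. Qed.

Lemma Im_mulR (z : C) (r : R) : complex.Im (z * r%:C) = complex.Im z * r.
Proof. by case: z => a b /=; rewrite mulr0 add0r. Qed.

Lemma ipow_even q : ('i ^+ q.*2 : C) = ((-1) ^+ q)%:C.
Proof. by rewrite -muln2 mulnC exprM sqr_i rmorphXn rmorphN1. Qed.

Lemma ipow_odd q : ('i ^+ q.*2.+1 : C) = ((-1) ^+ q)%:C * 'i.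
Proof. by rewrite exprSr ipow_even. Qed.

Lemma iy_term (y : R) k : ('i * y%:C) ^+ k / (k`!)%:R = 'i ^+ k * (y ^+ k / (k`!)%:R)%:C.
Proof. by rewrite exprMn -mulrA rmorphM rmorphXn fmorphV rmorph_nat. Qed.

Lemma nat_parity k : exists q, k = q.*2 \/ k = q.*2.+1.
Proof.
exists k./2; move: (odd_double_half k).
by case: (odd k) => e; [right|left]; rewrite -[in LHS]e.
Qed.

Lemma Re_iy_term (y : R) k : complex.Re (('i * y%:C) ^+ k / (k`!)%:R) = cos_coeff y k.
Proof.
rewrite iy_term Re_mulR /cos_coeff /=.
have [q [->|->]] := nat_parity k.
  rewrite ipow_even odd_double doubleK /=.
  by rewrite mul1r mulrA.
rewrite ipow_odd /= odd_double /=.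
by rewrite !(mulr0, mul0r, subr0).
Qed.

Lemma Im_iy_term (y : R) k : complex.Im (('i * y%:C) ^+ k / (k`!)%:R) = sin_coeff y k.
Proof.
rewrite iy_term Im_mulR /sin_coeff /=.
have [q [->|->]] := nat_parity k.
  rewrite ipow_even odd_double /=.
  by rewrite !(mulr0, mul0r, subr0).
rewrite ipow_odd /= odd_double /= doubleK.
by rewrite mulr1 mul0r addr0 mul1r mulrA.
Qed.

End CAux.

Section CExp.
Variable R : realType.
Local Notation C := R[i].
Local Open Scope complex_scope.

Definition cS (J : nat) (z : C) : C := \sum_(k < J) z ^+ k / (k`!)%:R.

Lemma cS_real (x : R) J : cS J x%:C = (series (exp_coeff x) J)%:C.
Proof.
rewrite /cS /series /= big_mkord rmorph_sum; apply: eq_bigr => k _.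
by rewrite /exp_coeff /= rmorphM rmorphXn fmorphV rmorph_nat.
Qed.

Lemma Re_sum I (r : seq I) (P : pred I) (F : I -> C) :
  complex.Re (\sum_(i <- r | P i) F i) = \sum_(i <- r | P i) complex.Re (F i).
Proof. by elim/big_rec2: _ => // i y z _ <-; case: (F i); case: z. Qed.

Lemma Im_sum I (r : seq I) (P : pred I) (F : I -> C) :
  complex.Im (\sum_(i <- r | P i) F i) = \sum_(i <- r | P i) complex.Im (F i).
Proof. by elim/big_rec2: _ => // i y z _ <-; case: (F i); case: z. Qed.

Lemma Re_cS_iy (y : R) J : complex.Re (cS J ('i * y%:C)) = series (cos_coeff y) J.
Proof.
rewrite /cS Re_sum /series /= big_mkord; apply: eq_bigr => k _.
exact: Re_iy_term.
Qed.

Lemma Im_cS_iy (y : R) J : complex.Im (cS J ('i * y%:C)) = series (sin_coeff y) J.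
Proof.
rewrite /cS Im_sum /series /= big_mkord; apply: eq_bigr => k _.
exact: Im_iy_term.
Qed.

Lemma series_split (u : R ^nat) J :
  series u (J + J) - series u J = \sum_(i < J) u (J + i)%N.
Proof.
rewrite /series /= !big_mkord big_split_ord /=.
by rewrite addrAC subrr add0r.
Qed.

Lemma cS_prod_bound (z w : C) J :
  nc (cS J (z + w) - cS J z * cS J w) <=
  series (exp_coeff (nc z + nc w)) (J + J) - series (exp_coeff (nc z + nc w)) J.
Proof.
pose P := \poly_(i < J) (z ^+ i / (i`!)%:R).
pose Q := \poly_(i < J) (w ^+ i / (i`!)%:R).
have hP : cS J z = P.[1].
  rewrite (horner_coef_wide _ (size_poly _ _)) /cS; apply: eq_bigr => i _.
  by rewrite coef_poly ltn_ord expr1n mulr1.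
have hQ : cS J w = Q.[1].
  rewrite (horner_coef_wide _ (size_poly _ _)) /cS; apply: eq_bigr => i _.
  by rewrite coef_poly ltn_ord expr1n mulr1.
have sPQ : (size (P * Q)%R <= J + J)%N.
  apply: leq_trans (size_polyMleq _ _) _.
  have h1 : (size P <= J)%N by apply: size_poly.
  have h2 : (size Q <= J)%N by apply: size_poly.
  rewrite -subn1 leq_subLR.
  by apply: leq_trans (leq_add h1 h2) _; rewrite leq_addl.
have hPQ : P.[1] * Q.[1] = \sum_(k < J) (P * Q)`_k + \sum_(i < J) (P * Q)`_(J + i).
  rewrite -hornerM (horner_coef_wide _ sPQ) big_split_ord /=.
  by congr (_ + _); apply: eq_bigr => i _; rewrite expr1n mulr1.
have low : \sum_(k < J) (P * Q)`_k = cS J (z + w).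
  rewrite /cS; apply: eq_bigr => k _.
  rewrite coefM addrC -binom_fact_sum_gen; apply: eq_bigr => j _.
  have hj : (j <= k)%N by rewrite -ltnS.
  have hk : (k < J)%N := ltn_ord k.
  rewrite !coef_poly (leq_ltn_trans hj hk) (leq_ltn_trans (leq_subr j k) hk).
  rewrite natrM invfM; ring.
have high : forall k, nc ((P * Q)`_k) <= exp_coeff (nc z + nc w) k.
  move=> k; rewrite coefM /exp_coeff /= addrC -binom_fact_sum_gen.
  apply: le_trans (nc_sum _ _ _) _; apply: ler_sum => j _.
  rewrite ncM !coef_poly.
  have e : nc z ^+ j * nc w ^+ (k - j) / ((k - j)`! * j`!)%:R
         = (nc z ^+ j / (j`!)%:R) * (nc w ^+ (k - j) / ((k - j)`!)%:R).
    by rewrite natrM invfM; ring.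
  rewrite [nc w ^+ _ * _]mulrC e.
  have g1 : nc (if (j < J)%N then z ^+ j / (j`!)%:R else 0) <= nc z ^+ j / (j`!)%:R.
    by case: ifP => _; rewrite ?nc_term // /nc normc0 divr_ge0 // exprn_ge0 // nc_ge0.
  have g2 : nc (if (k - j < J)%N then w ^+ (k - j) / ((k - j)`!)%:R else 0)
           <= nc w ^+ (k - j) / ((k - j)`!)%:R.
    by case: ifP => _; rewrite ?nc_term // /nc normc0 divr_ge0 // exprn_ge0 // nc_ge0.
  by apply: ler_pM => //; apply: nc_ge0.
rewrite hP hQ hPQ low series_split opprD addrA subrr add0r ncN.
apply: le_trans (nc_sum _ _ _) _; apply: ler_sum => i _; exact: high.
Qed.

Lemma Re_Rmul (r : R) (w : C) : complex.Re (r%:C * w) = r * complex.Re w.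
Proof. by case: w => a b /=; rewrite mul0r subr0. Qed.

Lemma Im_Rmul (r : R) (w : C) : complex.Im (r%:C * w) = r * complex.Im w.
Proof. by case: w => a b /=; rewrite mul0r addr0. Qed.

Lemma Re_add (z w : C) : complex.Re (z + w) = complex.Re z + complex.Re w.
Proof. by case: z; case: w. Qed.

Lemma Im_add (z w : C) : complex.Im (z + w) = complex.Im z + complex.Im w.
Proof. by case: z; case: w. Qed.

Lemma exp_series_cvg (x : R) : series (exp_coeff x) @ \oo --> expR x.
Proof. exact: is_cvg_series_exp_coeff. Qed.

Lemma cos_series_cvg (x : R) : series (cos_coeff x) @ \oo --> cos x.
Proof. rewrite unlock; exact: is_cvg_series_cos_coeff. Qed.

Lemma sin_series_cvg (x : R) : series (sin_coeff x) @ \oo --> sin x.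
Proof. rewrite unlock; exact: is_cvg_series_sin_coeff. Qed.

Lemma D_cvg0 (z w : C) :
  (fun J => nc (cS J (z + w) - cS J z * cS J w)) @ \oo --> (0 : R).
Proof.
set s := nc z + nc w.
have s0 : 0 <= s by rewrite addr_ge0 // nc_ge0.
apply: (@squeeze_cvgr _ _ _ _ (fun _ => 0) (fun J => expR s - series (exp_coeff s) J)).
- near=> J; rewrite nc_ge0 /=.
  apply: le_trans (cS_prod_bound z w J) _.
  by rewrite lerD2r exp_partial_le.
- exact: cvg_cst.
- rewrite -(subrr (expR s)); apply: cvgB; first exact: cvg_cst.
  exact: exp_series_cvg.
Unshelve. all: end_near.
Qed.

Lemma cexp_cvg (g : C) :
  (fun J => complex.Re (cS J g)) @ \oo --> complex.Re (cexp g) /\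
  (fun J => complex.Im (cS J g)) @ \oo --> complex.Im (cexp g).
Proof.
set x := complex.Re g; set y := complex.Im g.
have eg : g = x%:C + 'i * y%:C by rewrite /x /y [LHS]complexE.
pose D J := cS J (x%:C + 'i * y%:C) - cS J x%:C * cS J ('i * y%:C).
have hD := D_cvg0 x%:C ('i * y%:C).
have hRe : (fun J => complex.Re (D J)) @ \oo --> (0 : R).
  apply: (@squeeze_cvgr _ _ _ _ (fun J => - nc (D J)) (fun J => nc (D J))).
  - near=> J; rewrite -ler_norml; exact: Re_le_nc.
  - by rewrite -oppr0; apply: cvgN.
  - exact: hD.
have hIm : (fun J => complex.Im (D J)) @ \oo --> (0 : R).
  apply: (@squeeze_cvgr _ _ _ _ (fun J => - nc (D J)) (fun J => nc (D J))).
  - near=> J; rewrite -ler_norml; exact: Im_le_nc.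
  - by rewrite -oppr0; apply: cvgN.
  - exact: hD.
have eS : forall J, cS J g = (series (exp_coeff x) J)%:C * cS J ('i * y%:C) + D J.
  by move=> J; rewrite /D -eg cS_real addrC subrK.
split.
- have key : (series (exp_coeff x) \* series (cos_coeff y) + (fun J => complex.Re (D J)))
      @ \oo --> expR x * cos y + 0.
    by apply: cvgD => //; apply: cvgM => //; [exact: exp_series_cvg | exact: cos_series_cvg].
  rewrite addr0 in key.
  have -> : complex.Re (cexp g) = expR x * cos y.
    by rewrite /cexp Re_Rmul /= mul0r mulr0 subrr addr0.
  apply: cvg_trans key; apply: near_eq_cvg; near=> J.
  by rewrite /= eS Re_add Re_Rmul Re_cS_iy.
- have key : (series (exp_coeff x) \* series (sin_coeff y) + (fun J => complex.Im (D J)))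
      @ \oo --> expR x * sin y + 0.
    by apply: cvgD => //; apply: cvgM => //; [exact: exp_series_cvg | exact: sin_series_cvg].
  rewrite addr0 in key.
  have -> : complex.Im (cexp g) = expR x * sin y.
    by rewrite /cexp Im_Rmul /= mul0r mul1r !add0r.
  apply: cvg_trans key; apply: near_eq_cvg; near=> J.
  by rewrite /= eS Im_add Im_Rmul Im_cS_iy.
Unshelve. all: end_near.
Qed.

Lemma fact_split j i : (j`! * i`! <= (j + i)`!)%N.
Proof.
have e := bin_fact (leq_addr i j); rewrite addKn in e.
by rewrite -e leq_pmull // bin_gt0 leq_addr.
Qed.

Lemma cS_diff_bound (g : C) j d :
  nc (cS (j + d) g - cS j g) <= nc g ^+ j / (j`!)%:R * expR (nc g).
Proof.
have r0 := nc_ge0 g.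
rewrite /cS big_split_ord /= addrAC subrr add0r.
apply: le_trans (nc_sum _ _ _) _.
apply: (@le_trans _ _ (nc g ^+ j / (j`!)%:R * series (exp_coeff (nc g)) d)); last first.
  by apply: ler_wpM2l; [rewrite divr_ge0 // exprn_ge0 | exact: exp_partial_le].
rewrite /series /= big_mkord mulr_sumr; apply: ler_sum => i _.
rewrite nc_term /exp_coeff /= exprD.
have h : ((j + i)`!%:R : R)^-1 <= (j`!%:R)^-1 * (i`!%:R)^-1.
  rewrite -invfM -natrM lef_pV2 ?ler_nat ?fact_split //.
    by rewrite posrE ltr0n fact_gt0.
  by rewrite posrE ltr0n muln_gt0 !fact_gt0.
apply: le_trans (ler_wpM2l _ h) _; first by rewrite mulr_ge0 // exprn_ge0.
by rewrite [X in _ <= X]mulrACA.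
Qed.

Lemma cS_tail (g : C) j :
  (complex.Re (cexp g) - complex.Re (cS j g)) ^+ 2 +
  (complex.Im (cexp g) - complex.Im (cS j g)) ^+ 2
  <= (nc g ^+ j / (j`!)%:R * expR (nc g)) ^+ 2.
Proof.
have [hR hI] := cexp_cvg g.
set B := nc g ^+ j / (j`!)%:R * expR (nc g).
pose f J := (complex.Re (cS J g) - complex.Re (cS j g)) ^+ 2 +
            (complex.Im (cS J g) - complex.Im (cS j g)) ^+ 2.
have hf : f @ \oo --> (complex.Re (cexp g) - complex.Re (cS j g)) ^+ 2 +
            (complex.Im (cexp g) - complex.Im (cS j g)) ^+ 2.
  apply: cvgD; apply: cvgM => //; apply: cvgB => //; exact: cvg_cst.
rewrite -(cvg_lim _ hf) //; apply: limr_le; first by apply/cvg_ex; eexists; exact: hf.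
near=> J.
have hJ : (j <= J)%N by near: J; exists j.
rewrite /f -(subnKC hJ).
have e : forall z w : C, (complex.Re z - complex.Re w) ^+ 2 + (complex.Im z - complex.Im w) ^+ 2
   = nc (z - w) ^+ 2.
  by move=> [a b] [c d]; rewrite nc_sq.
have B0 : 0 <= B by rewrite /B mulr_ge0 ?divr_ge0 ?exprn_ge0 ?nc_ge0 ?expR_ge0.
rewrite e ler_pXn2r ?nnegrE ?nc_ge0 //.
exact: cS_diff_bound.
Unshelve. all: end_near.
Qed.

End CExp.

Section Fockcalc.
Variables (R : realType) (H : lmodType R[i]) (ip : H -> H -> R[i])
  (T : topologicalLmodType R[i]) (emb : T -> H) (g : T -> R[i]) (f : T).
Local Notation C := R[i].
Local Open Scope complex_scope.

Definition rep (L : seq (C * nat)) : fockrep T := [seq (p.1, nseq p.2 f) | p <- L].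
Definition coefL (L : seq (C * nat)) (m : nat) : C := \sum_(p <- L | p.2 == m) p.1.
Local Notation a := (ip (emb f) (emb f)).
Local Notation gam := (dualp g f).

Lemma map_cst_nseq (A B : Type) (b : B) (s : seq A) : [seq b | _ <- s] = nseq (size s) b.
Proof. by elim: s => //= x s ->. Qed.

Lemma sym_ip_nseq n n' :
  sym_ip ip emb (nseq n f) (nseq n' f) = if n == n' then a ^+ n else 0.
Proof.
rewrite /sym_ip !size_nseq; case: eqP => // <-.
rewrite (eq_bigr (fun _ => a ^+ n)); last first.
  move=> sg _; rewrite (eq_bigr (fun _ => a)); last first.
    by move=> i _; rewrite !nth_nseq !ltn_ord.
  by rewrite prodr_const card_ord.
rewrite sumr_const card_Sn -[a ^+ n *+ _]mulr_natr mulrC -mulrA mulfV ?mulr1 //.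
Qed.

Lemma annih_gen_nseq c n :
  annih_gen g (c, nseq n.+1 f) =
  nseq (n.+1)`! (c * (Num.sqrt (n.+1%:R : R))%:C / (n.+1)`!%:R * gam, nseq n f).
Proof.
rewrite /annih_gen /=.
have hn : size (nseq n f) = n by rewrite size_nseq.
move: (size (nseq n f)) hn => n' hn.
rewrite (eq_map (g := fun _ => (c * (Num.sqrt (n'.+1%:R : R))%:C / (n'.+1)`!%:R * gam, nseq n f))).
  by rewrite map_cst_nseq -cardE card_Sn hn.
move=> sg /=; rewrite -[f :: nseq n f]/(nseq n.+1 f) nth_nseq -hn ltn_ord; congr (_, _).
rewrite (eq_map (g := fun _ => f)); first by rewrite map_cst_nseq size_enum_ord hn.
by move=> i; rewrite nth_nseq ltn_ord.
Qed.

Definition annLg (p : C * nat) : seq (C * nat) :=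
  if p.2 is n.+1 then nseq (n.+1)`! (p.1 * (Num.sqrt (n.+1%:R : R))%:C / (n.+1)`!%:R * gam, n)
  else [::].
Definition annL (L : seq (C * nat)) := flatten [seq annLg p | p <- L].
Definition scL (c : C) (L : seq (C * nat)) := [seq (c * p.1, p.2) | p <- L].
Definition expL (L : seq (C * nat)) :=
  flatten [seq scL ((k`!%:R)^-1) (iter k annL L) | k <- iota 0 (\max_(p <- L) p.2).+1].

Lemma rep_cat L L' : rep (L ++ L') = rep L ++ rep L'.
Proof. exact: map_cat. Qed.

Lemma annih_rep L : annih g (rep L) = rep (annL L).
Proof.
elim: L => // [[c n] L] IH.
rewrite /annih /= -/(annih g (rep L)) IH /annL /= -/(annL L) rep_cat; congr (_ ++ _).
case: n => [|n] //=; rewrite annih_gen_nseq /rep map_nseq //.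
Qed.

Lemma fscale_rep c L : fscale c (rep L) = rep (scL c L).
Proof. by rewrite /fscale /rep /scL -!map_comp. Qed.

Lemma iter_rep k L : iter k (annih g) (rep L) = rep (iter k annL L).
Proof. by elim: k => //= k ->; rewrite annih_rep. Qed.

Lemma flatten_rep (s : seq nat) (F : nat -> seq (C * nat)) :
  flatten [seq rep (F k) | k <- s] = rep (flatten [seq F k | k <- s]).
Proof. by elim: s => //= k s ->; rewrite rep_cat. Qed.

Lemma max_rep L : \max_(p <- rep L) size p.2 = \max_(p <- L) p.2.
Proof. by rewrite big_map; apply: eq_bigr => p _; rewrite size_nseq. Qed.

Lemma exp_rep L : exp_annih g (rep L) = rep (expL L).
Proof.
rewrite /exp_annih max_rep /expL -flatten_rep; congr flatten; apply: eq_map => k.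
by rewrite iter_rep fscale_rep.
Qed.

Lemma coefL_cat L L' m : coefL (L ++ L') m = coefL L m + coefL L' m.
Proof. by rewrite /coefL big_cat. Qed.

Lemma coefL_flatten (s : seq nat) (F : nat -> seq (C * nat)) m :
  coefL (flatten [seq F k | k <- s]) m = \sum_(k <- s) coefL (F k) m.
Proof.
elim: s => [|k s IH]; first by rewrite /coefL !big_nil.
by rewrite /= coefL_cat IH big_cons.
Qed.

Lemma coefL_scL c L m : coefL (scL c L) m = c * coefL L m.
Proof. by rewrite /coefL /scL big_map mulr_sumr. Qed.

Lemma coefL_nseq k (p : C * nat) m : coefL (nseq k p) m = if p.2 == m then p.1 *+ k else 0.
Proof.
rewrite /coefL big_nseq_cond; case: ifP => // _.
by elim: k => //= k ->; rewrite mulrS.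
Qed.

Lemma coefL_annL L m : coefL (annL L) m = (Num.sqrt (m.+1%:R : R))%:C * gam * coefL L m.+1.
Proof.
elim: L => [|[c n] L IH]; first by rewrite /coefL !big_nil mulr0.
rewrite /annL /= -/(annL L) coefL_cat IH /coefL big_cons /= -/(coefL L m.+1).
rewrite -/(coefL (annLg (c, n)) m).
case: n => [|n] /=; first by rewrite /coefL big_nil add0r.
rewrite coefL_nseq /= eqSS; case: eqP => [->|_]; last by rewrite add0r.
rewrite -mulr_natr mulrDr; congr (_ + _).
have hf : ((m.+1)`!%:R : C) != 0 by rewrite pnatr_eq0 -lt0n fact_gt0.
by field.
Qed.

Definition sq (m k : nat) : C := \prod_(j < k) (Num.sqrt ((m + j).+1%:R : R))%:C.
Definition cc (n : nat) : C := real_complex R ((Num.sqrt (n`!%:R : R))^-1).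

Lemma coefL_iter k L m : coefL (iter k annL L) m = sq m k * gam ^+ k * coefL L (m + k).
Proof.
elim: k m => [|k IH] m; first by rewrite /sq big_ord0 expr0 !mul1r addn0.
rewrite iterS coefL_annL IH /sq big_ord_recl /= addn0 addSnnS.
have e : \prod_(i < k) (Num.sqrt ((m + bump 0 i).+1%:R : R))%:C =
         \prod_(i < k) (Num.sqrt ((m.+1 + i).+1%:R : R))%:C.
  by apply: eq_bigr => i _; rewrite /bump /= add1n addSnnS.
by rewrite e exprS; ring.
Qed.

Lemma sqrt_fact m k : Num.sqrt ((m + k)`!%:R : R) =
  Num.sqrt (m`!%:R) * \prod_(j < k) Num.sqrt ((m + j).+1%:R).
Proof.
elim: k => [|k IH]; first by rewrite addn0 big_ord0 mulr1.
rewrite addnS factS natrM sqrtrM // IH big_ord_recr /=.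
by rewrite mulrC mulrA.
Qed.

Lemma sq_cc m k : sq m k * cc (m + k) = cc m.
Proof.
rewrite /sq /cc -rmorph_prod -rmorphM sqrt_fact invfM.
set P := \prod_(j < k) _.
have P0 : P != 0.
  apply: lt0r_neq0; apply: prodr_gt0 => j _.
  by rewrite sqrtr_gt0 ltr0n.
by rewrite mulrCA mulfV // mulr1.
Qed.

Lemma iota_index K : iota 0 K = index_iota 0 K.
Proof. by rewrite /index_iota subn0. Qed.

Lemma coef_expL L (P : pred nat) m :
  (forall j, coefL L j = if P j then cc j else 0) ->
  coefL (expL L) m = cc m * \sum_(k < (\max_(p <- L) p.2).+1)
                             (if P (m + k)%N then gam ^+ k / (k`!)%:R else 0).
Proof.
move=> hL; rewrite /expL coefL_flatten iota_index big_mkord mulr_sumr.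
apply: eq_bigr => k _; rewrite coefL_scL coefL_iter hL.
case: (P _); last by rewrite !mulr0.
by rewrite mulrAC sq_cc; ring.
Qed.

Lemma fock_ip_rep L L' : fock_ip ip emb (rep L) (rep L') =
  \sum_(p <- L) \sum_(q <- L') conjc p.1 * q.1 * (if p.2 == q.2 then a ^+ p.2 else 0).
Proof.
rewrite /fock_ip /rep big_map; apply: eq_bigr => p _.
by rewrite big_map; apply: eq_bigr => q _; rewrite sym_ip_nseq.
Qed.

Lemma sum_pick (M k : nat) (F : nat -> C) : (k < M)%N ->
  \sum_(m < M) (if k == m then F m else 0) = F k.
Proof.
move=> hk; rewrite (bigD1 (Ordinal hk)) //= eqxx big1 ?addr0 // => i hi.
rewrite ifF //; apply/negbTE; apply: contra hi => /eqP e.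
by apply/eqP/val_inj; rewrite /= e.
Qed.

Lemma conjc_sum_if (L : seq (C * nat)) m :
  conjc (coefL L m) = \sum_(p <- L) (if p.2 == m then conjc p.1 else 0).
Proof.
rewrite /coefL big_mkcond raddf_sum /=; apply: eq_bigr => p _.
by case: ifP => // _; rewrite conjc0.
Qed.

Lemma fock_ip_coef L M : all (fun p => (p.2 < M)%N) L ->
  fock_ip ip emb (rep L) (rep L) = \sum_(m < M) conjc (coefL L m) * coefL L m * a ^+ m.
Proof.
move=> hL; rewrite fock_ip_rep.
have e1 : forall p q, p \in L ->
   conjc p.1 * q.1 * (if p.2 == q.2 then a ^+ p.2 else 0) =
   \sum_(m < M) (if p.2 == m then conjc p.1 else 0) * (if q.2 == m then q.1 else 0) * a ^+ m.
  move=> p q pL; have hp : (p.2 < M)%N by move/allP: hL => /(_ p pL).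
  transitivity (\sum_(m < M) (if p.2 == m then
        conjc p.1 * (if q.2 == m then q.1 else 0) * a ^+ m else 0)).
    have := sum_pick (fun m => conjc p.1 * (if q.2 == m then q.1 else 0) * a ^+ m) hp.
    rewrite /= => ->; rewrite [p.2 == q.2]eq_sym.
    by case: ifP => _; rewrite ?mulr0 ?mul0r.
  apply: eq_bigr => m _; case: (p.2 =P m) => [<-|]; last by rewrite !mul0r.
  by rewrite ?eqxx.
rewrite big_seq_cond.
rewrite (eq_bigr (fun p : C * nat => \sum_(m < M) \sum_(q <- L) (if p.2 == m then conjc p.1 else 0) * (if q.2 == m then q.1 else 0) * a ^+ m)); last first.
  move=> p /andP[pL _]; rewrite exchange_big /=; apply: eq_bigr => q _; exact: e1.
rewrite -big_seq_cond exchange_big /=; apply: eq_bigr => m _.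
rewrite conjc_sum_if /coefL big_mkcond /= mulr_suml mulr_suml; apply: eq_bigr => p _.
rewrite mulr_sumr mulr_suml [RHS]big_mkcond; apply: eq_bigr => q _ /=.
by case: (q.2 == m); rewrite ?mulr0 ?mul0r.
Qed.

Lemma Re_fock (r : R) L M : a = r%:C -> all (fun p => (p.2 < M)%N) L ->
  complex.Re (fock_ip ip emb (rep L) (rep L)) = \sum_(m < M) nc (coefL L m) ^+ 2 * r ^+ m.
Proof.
move=> ha hL; rewrite (fock_ip_coef hL) Re_sum; apply: eq_bigr => m _.
rewrite ha -rmorphXn Re_mulR nc_sq; congr (_ * _).
by case: (coefL L m) => x y /=; ring.
Qed.

Lemma all_annL M L : all (fun p => (p.2 < M)%N) L -> all (fun p => (p.2 < M)%N) (annL L).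
Proof.
elim: L => // [[c n] L IH] /= /andP[hn hL]; rewrite /annL /= -/(annL L) all_cat IH // andbT.
case: n hn => [|n] hn //=; rewrite all_nseq /= orbC (ltn_trans (ltnSn n) hn) //.
Qed.

Lemma all_scL M c L : all (fun p => (p.2 < M)%N) L -> all (fun p => (p.2 < M)%N) (scL c L).
Proof. by rewrite /scL all_map. Qed.

Lemma all_iter M k L : all (fun p => (p.2 < M)%N) L ->
  all (fun p => (p.2 < M)%N) (iter k annL L).
Proof. by elim: k => //= k IH hL; apply: all_annL; apply: IH. Qed.

Lemma all_flat (A : Type) (P : pred A) (ss : seq (seq A)) :
  all P (flatten ss) = all (all P) ss.
Proof. by elim: ss => //= s ss IH; rewrite all_cat IH. Qed.

Lemma all_expL M L : all (fun p => (p.2 < M)%N) L -> all (fun p => (p.2 < M)%N) (expL L).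
Proof.
move=> hL; rewrite /expL all_flat all_map; apply/allP => k _ /=.
by apply: all_scL; apply: all_iter.
Qed.

Lemma nc_cc m : nc (cc m) = (Num.sqrt (m`!%:R : R))^-1.
Proof. by rewrite /cc ncR ger0_norm // invr_ge0 sqrtr_ge0. Qed.

Lemma nc_cc_sq m : nc (cc m) ^+ 2 = (m`!%:R : R)^-1.
Proof. by rewrite nc_cc exprVn sqr_sqrtr // ler0n. Qed.

Lemma fact_sq_bound (z : R) j m : 0 <= z ->
  (m`!%:R : R)^-1 * (z / (j`!)%:R) ^+ 2 <= z ^+ 2 / ((j`! * m`!)%:R).
Proof.
move=> z0.
have hj : (1 : R) <= j`!%:R by rewrite ler1n fact_gt0.
have hj0 : (0 : R) < j`!%:R by rewrite ltr0n fact_gt0.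
have hm0 : (0 : R) < m`!%:R by rewrite ltr0n fact_gt0.
have key : ((j`!%:R : R) ^+ 2)^-1 <= (j`!%:R)^-1.
  rewrite lef_pV2 ?posrE ?exprn_gt0 //.
  by rewrite expr2 ler_peMl // ltW.
have e1 : (m`!%:R : R)^-1 * (z / (j`!)%:R) ^+ 2 = z ^+ 2 * (m`!%:R)^-1 * ((j`!%:R) ^+ 2)^-1.
  by rewrite expr_div_n; ring.
have e2 : z ^+ 2 / ((j`! * m`!)%:R) = z ^+ 2 * (m`!%:R)^-1 * (j`!%:R)^-1.
  by rewrite natrM invfM; ring.
rewrite e1 e2; apply: ler_wpM2l => //.
by rewrite mulr_ge0 ?exprn_ge0 // invr_ge0 ltW.
Qed.

Lemma sum_bound (n M : nat) (K x y : R) (t : nat -> R) :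
  (M <= n.+1)%N -> 0 <= K -> 0 <= x -> 0 <= y ->
  (forall m, (m < M)%N -> t m <= K * (x ^+ (n - m) / (((n - m)`! * m`!)%:R))) ->
  \sum_(m < M) t m * y ^+ m <= K * ((x + y) ^+ n / (n`!)%:R).
Proof.
move=> hM K0 x0 y0 ht.
rewrite -binom_fact_sum mulr_sumr.
rewrite (big_ord_widen n.+1 (fun m => t m * y ^+ m)) // big_mkcond /=.
apply: ler_sum => i _; case: ifP => hi.
  apply: le_trans (ler_wpM2r (exprn_ge0 _ y0) (ht _ hi)) _.
  by rewrite le_eqVlt; apply/orP; left; apply/eqP; ring.
by rewrite mulr_ge0 // divr_ge0 ?mulr_ge0 ?exprn_ge0 ?ler0n.
Qed.

End Fockcalc.

Section Final.
Variables (R : realType) (H : lmodType R[i]) (ip : H -> H -> R[i])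
  (T : topologicalLmodType R[i]) (emb : T -> H) (g : T -> R[i]) (f : T).
Local Notation C := R[i].
Local Open Scope complex_scope.
Local Notation a := (ip (emb f) (emb f)).
Local Notation gam := (dualp g f).
Local Notation rep := (rep f).
Local Notation cc := (@cc R).

Definition LN (N : nat) : seq (C * nat) := flatten [seq [:: (cc n, n)] | n <- iota 0 N].

Lemma eps_rep n : eps n f = rep [:: (cc n, n)].
Proof. by []. Qed.

Lemma eps_partial_rep N : eps_partial N f = rep (LN N).
Proof. by rewrite /eps_partial /LN -flatten_rep. Qed.

Lemma coefL_L1 n j : coefL [:: (cc n, n)] j = if j == n then cc j else 0.
Proof.
rewrite /coefL big_cons big_nil /= addr0 eq_sym.
by case: eqP => // ->.
Qed.

Lemma coefL_LN N j : coefL (LN N) j = if (j < N)%N then cc j else 0.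
Proof.
rewrite /LN coefL_flatten iota_index big_mkord.
rewrite (eq_bigr (fun n : 'I_N => if j == n then cc j else 0)); last first.
  by move=> n _; rewrite coefL_L1 eq_sym.
case: ifP => hj; first by rewrite (sum_pick (fun _ => cc j) hj).
rewrite big1 // => n _; case: eqP => // e.
by move: (ltn_ord n); rewrite -e hj.
Qed.

Lemma max_L1 n : \max_(p <- [:: (cc n, n)]) p.2 = n.
Proof. by rewrite big_cons big_nil maxn0. Qed.

Lemma max_LN N : (N <= (\max_(p <- LN N) p.2).+1)%N.
Proof.
case: N => // N.
have e : \max_(p <- LN N.+1) p.2 = \max_(n <- iota 0 N.+1) n.
  rewrite /LN big_flatten big_map /=; apply: eq_bigr => n _.
  by rewrite big_cons big_nil maxn0.
rewrite e ltnS; apply: (@leq_bigmax_seq _ _ _ (fun n => n)) => //.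
by rewrite mem_iota add0n leq0n ltnSn.
Qed.

Lemma all_L1 n : all (fun p => (p.2 < n.+1)%N) [:: (cc n, n)].
Proof. by rewrite /= ltnSn. Qed.

Lemma all_LN N : all (fun p => (p.2 < N)%N) (LN N).
Proof.
rewrite /LN all_flat all_map; apply/allP => n /=.
by rewrite mem_iota /= andbT.
Qed.

Lemma nc_cc_mul m (w : C) : nc (cc m * w) ^+ 2 = (m`!%:R : R)^-1 * nc w ^+ 2.
Proof. by rewrite ncM exprMn nc_cc_sq. Qed.

Lemma gnorm_eps_bound (r : R) n : a = r%:C -> 0 <= r ->
  g_norm ip emb g (eps n f) <= Num.sqrt ((nc gam ^+ 2 + r) ^+ n / (n`!)%:R).
Proof.
move=> ha r0.
rewrite /g_norm eps_rep exp_rep /fock_norm (Re_fock ha (all_expL g f (all_L1 n))).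
apply: ler_wsqrtr; rewrite -[X in _ <= X]mul1r.
apply: (@sum_bound _ n n.+1 1 (nc gam ^+ 2) r
   (fun m => nc (coefL (expL g f [:: (cc n, n)]) m) ^+ 2)) => //.
  by rewrite exprn_ge0 // nc_ge0.
move=> m hm.
rewrite (@coef_expL _ _ g f _ (fun j => j == n)); last by move=> j; rewrite coefL_L1.
rewrite max_L1.
have hmn : (m <= n)%N by rewrite -ltnS.
rewrite (eq_bigr (fun k : 'I_n.+1 => if (n - m)%N == k then gam ^+ k / (k`!)%:R else 0)); last first.
  move=> k _; congr (if _ then _ else _).
  by apply/eqP/eqP; lia.
rewrite (sum_pick (fun k => gam ^+ k / (k`!)%:R)); last by rewrite ltnS leq_subr.
rewrite nc_cc_mul nc_term mul1r -exprM mulnC exprM.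
apply: fact_sq_bound; exact: exprn_ge0 (nc_ge0 _).
Qed.

Lemma fnorm_eps_bound (r : R) n : a = r%:C -> 0 <= r ->
  fock_norm ip emb (eps n f) <= Num.sqrt ((0 + r) ^+ n / (n`!)%:R).
Proof.
move=> ha r0.
rewrite /fock_norm eps_rep (Re_fock ha (all_L1 n)).
apply: ler_wsqrtr; rewrite -[X in _ <= X]mul1r.
apply: (@sum_bound _ n n.+1 1 0 r
   (fun m => nc (coefL [:: (cc n, n)] m) ^+ 2)) => //.
move=> m hm; rewrite coefL_L1 mul1r.
case: eqP => [->|ne].
  by rewrite nc_cc_sq subnn expr0 mul1n mul1r.
rewrite /nc normc0 expr0n /= divr_ge0 // ?ler0n //.
Qed.

Lemma sum_trunc (K d : nat) (u : nat -> C) : (d <= K)%N ->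
  \sum_(k < K) (if (k < d)%N then u k else 0) = \sum_(k < d) u k.
Proof. by move=> hd; rewrite (big_ord_widen K u hd) [RHS]big_mkcond. Qed.

Definition Lfull N := expL g f (LN N) ++ scL (- cexp gam) (LN N).

Lemma coef_full N m : (m < N)%N ->
  coefL (Lfull N) m = cc m * (cS (N - m) gam - cexp gam).
Proof.
move=> hm.
rewrite /Lfull coefL_cat coefL_scL coefL_LN hm.
rewrite (@coef_expL _ _ g f _ (fun j => (j < N)%N)); last by move=> j; rewrite coefL_LN.
rewrite (eq_bigr (fun k : 'I_(\max_(p <- LN N) p.2).+1 =>
           if (k < N - m)%N then gam ^+ k / (k`!)%:R else 0)); last first.
  by move=> k _; rewrite ltn_subRL.
have := @sum_trunc _ (N - m) (fun k => gam ^+ k / (k`!)%:R)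
   (leq_trans (leq_subr _ _) (max_LN N)).
rewrite /= => ->.
by rewrite /cS; ring.
Qed.

Lemma full_bound (r : R) N : a = r%:C -> 0 <= r ->
  fock_norm ip emb (exp_annih g (eps_partial N f) ++ fscale (- cexp gam) (eps_partial N f))
  <= Num.sqrt (expR (nc gam) ^+ 2 * ((nc gam ^+ 2 + r) ^+ N / (N`!)%:R)).
Proof.
move=> ha r0.
have hall : all (fun p => (p.2 < N)%N) (Lfull N).
  by rewrite /Lfull all_cat all_expL ?all_scL ?all_LN.
rewrite eps_partial_rep exp_rep fscale_rep -rep_cat -/(Lfull N).
rewrite /fock_norm (Re_fock ha hall).
apply: ler_wsqrtr.
apply: (@sum_bound _ N N (expR (nc gam) ^+ 2) (nc gam ^+ 2) r
   (fun m => nc (coefL (Lfull N) m) ^+ 2)) => //.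
  by rewrite exprn_ge0 ?nc_ge0.
move=> m hm; rewrite coef_full // nc_cc_mul.
have e : nc (cS (N - m) gam - cexp gam) ^+ 2 =
  (complex.Re (cexp gam) - complex.Re (cS (N - m) gam)) ^+ 2 +
  (complex.Im (cexp gam) - complex.Im (cS (N - m) gam)) ^+ 2.
  rewrite ncB nc_sq.
  by case: (cexp gam) => x1 y1; case: (cS (N - m) gam) => x2 y2.
rewrite e.
apply: le_trans (ler_wpM2l _ (cS_tail gam (N - m))) _; first by rewrite invr_ge0 ler0n.
have hq := fact_sq_bound (N - m) m (exprn_ge0 (N - m) (nc_ge0 gam)).
have e1 : (m`!%:R : R)^-1 * (nc gam ^+ (N - m) / ((N - m)`!)%:R * expR (nc gam)) ^+ 2
  = expR (nc gam) ^+ 2 * ((m`!%:R : R)^-1 * (nc gam ^+ (N - m) / ((N - m)`!)%:R) ^+ 2).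
  by rewrite !exprMn; ring.
rewrite e1 exprAC; apply: ler_wpM2l => //.
Qed.

End Final.

Unset Implicit Arguments.

Theorem lemma2p15 (R : realType) (H : lmodType R[i]) (ip : H -> H -> R[i])
  (T : topologicalLmodType R[i]) (emb : T -> H)
  (Hip : is_inner_product ip) (Hcompl : ip_complete ip)
  (Hiota : continuous_dense_embedding ip emb)
  (g : T -> R[i]) (Hg : in_antidual g) (f : T) :
  [/\ cvgn (series (fun n => g_norm ip emb g (eps n f))),
      cvgn (series (fun n => fock_norm ip emb (eps n f))) &
      (fun N => fock_norm ip emb
                  (exp_annih g (eps_partial N f)
                   ++ fscale (- cexp (dualp g f)) (eps_partial N f)))
        @ \oo --> (0 : R)].
Proof.
have ha0 : 0 <= ip (emb f) (emb f) by case: Hip.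
set r := complex.Re (ip (emb f) (emb f)).
have ha : ip (emb f) (emb f) = (r%:C)%C.
  move: ha0; rewrite lecE => /andP[/eqP hIm _].
  rewrite [LHS]complexE -/r hIm /=.
  by rewrite rmorph0 mulr0 addr0.
have r0 : 0 <= r by move: ha0; rewrite lecE => /andP[_ h].
split.
- apply: (@series_le_cvg _ _ (fun n => Num.sqrt ((nc (dualp g f) ^+ 2 + r) ^+ n / (n`!)%:R))).
  + by move=> n; rewrite /g_norm /fock_norm sqrtr_ge0.
  + by move=> n; rewrite sqrtr_ge0.
  + by move=> n; apply: gnorm_eps_bound.
  + by apply: sqrt_exp_series_cvg; rewrite addr_ge0 // exprn_ge0 // nc_ge0.
- apply: (@series_le_cvg _ _ (fun n => Num.sqrt ((0 + r) ^+ n / (n`!)%:R))).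
  + by move=> n; rewrite /fock_norm sqrtr_ge0.
  + by move=> n; rewrite sqrtr_ge0.
  + by move=> n; apply: fnorm_eps_bound.
  + by apply: sqrt_exp_series_cvg; rewrite add0r.
- apply: (@squeeze_cvgr _ _ _ _ (fun _ => 0)
     (fun N => Num.sqrt (expR (nc (dualp g f)) ^+ 2 *
        ((nc (dualp g f) ^+ 2 + r) ^+ N / (N`!)%:R)))).
  + near=> N; rewrite /fock_norm sqrtr_ge0 /=.
    exact: full_bound.
  + exact: cvg_cst.
  + exact: sqrt_exp_cvg0.
Unshelve. all: end_near.
Qed.
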